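(* Let $S>0$, let $D$ be a finite multiset of items with sizes in $(0,S]$, let $k\ge1$ be an integer and $\epsilon\in(0,1/2]$. Consider the following algorithm. (1) Let $I$ be the items of $D$ of size at most $\epsilon S$ and $J$ the items of size larger than $\epsilon S$. (2) Sort $J$ in non-decreasing order of size and partition it into consecutive groups of $g=\max\{1,\lfloor n(J)\epsilon^2\rfloor\}$ items (the last group possibly smaller), where $n(J)$ is the number of items of $J$; let $U$ be the instance obtained by rounding the size of every item up to the maximum size in its group. (3) Compute an optimal $k$-times bin packing of $U$ (i.e. of $U_k$), e.g. by optimally solving its configuration integer program. (4) Replace every copy of a rounded item by the corresponding copy of its original item, obtaining a $k$-times bin packing of $J$. (5) Insert the $k$ copies of each item of $I$ one at a time, each into some existing bin in which it fits (total size at most $S$) and which contains no copy of the same item, opening a new bin only if no such bin exists. Then the number $bins(D_k)$ of bins produced satisfies $$bins(D_k)\le(1+2\epsilon)\,OPT(D_k)+k.$$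
   Context: For a multiset $D$ of items with sizes in $(0,S]$ and an integer $k\ge1$, $D_k$ denotes the collection of $k$ copies of each item of $D$. A $k$-times bin packing of $D$ is an assignment of all copies in $D_k$ to bins such that each bin has total size at most $S$ and no bin contains two copies of the same item; $OPT(D_k)$ is the minimum number of bins in such a packing. *)

(* Defs.v *)
From HB Require Import structures.
From mathcomp Require Import all_boot all_order all_algebra.
Set Implicit Arguments. Unset Strict Implicit. Unset Printing Implicit Defensive.
Import Order.TTheory GRing.Theory Num.Theory.
Local Open Scope ring_scope.

Section KPack.
Variables (R : archiRealFieldType) (T : finType).

(* total size of a bin (a bin contains at most one copy of each item, so it
   is represented by the set of items having a copy in it) *)
Definition load (w : T -> R) (B : {set T}) : R := \sum_(i in B) w i.

(* P is a k-times bin packing of the items A (sizes w, bin capacity S):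
   a list of bins, each a set of items of A of total size <= S, such that
   each item of A lies in exactly k bins (= its k copies, pairwise in
   different bins). *)
Definition kpacking (A : {set T}) (w : T -> R) (S : R) (k : nat)
    (P : seq {set T}) : Prop :=
  (forall B, B \in P -> B \subset A) /\
  (forall B, B \in P -> load w B <= S) /\
  (forall i, i \in A -> count (fun B : {set T} => i \in B) P = k).

Definition opt_kpacking A w S k P : Prop :=
  kpacking A w S k P /\ forall Q, kpacking A w S k Q -> (size P <= size Q)%N.

Definition smallI (s : T -> R) (S eps : R) : {set T} := [set i | s i <= eps * S].
Definition largeJ (s : T -> R) (S eps : R) : {set T} := [set i | eps * S < s i].

Definition gsize (nJ : nat) (eps : R) : nat := maxn 1 (Num.truncn (nJ%:R * eps ^+ 2)).

(* rounded sizes: ordJ is J sorted by size; position p lies in group p %/ g;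
   each item gets the maximum size in its group *)
Definition rounded (s : T -> R) (g : nat) (ordJ : seq T) (i : T) : R :=
  \big[Num.max/0]_(j <- ordJ | (index j ordJ %/ g == index i ordJ %/ g)%N) s j.

Inductive insert_step (s : T -> R) (S : R) :
    seq {set T} -> T -> seq {set T} -> Prop :=
| InsOld bins i j : (j < size bins)%N -> i \notin nth set0 bins j ->
    load s (nth set0 bins j) + s i <= S ->
    insert_step s S bins i (set_nth set0 bins j (i |: nth set0 bins j))
| InsNew bins i :
    (forall j, (j < size bins)%N -> i \notin nth set0 bins j ->
       S < load s (nth set0 bins j) + s i) ->
    insert_step s S bins i (rcons bins [set i]).

Inductive insert_run (s : T -> R) (S : R) :
    seq {set T} -> seq T -> seq {set T} -> Prop :=
| RunNil bins : insert_run s S bins [::] bins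
| RunCons bins i xs bins' bins'' : insert_step s S bins i bins' ->
    insert_run s S bins' xs bins'' -> insert_run s S bins (i :: xs) bins''.

End KPack.

(* Main.v *)
Require Import Defs.
From HB Require Import structures.
From mathcomp Require Import all_boot all_order all_algebra.
From mathcomp Require Import ring lra zify.
Import Order.TTheory GRing.Theory Num.Theory.
Local Open Scope ring_scope.
Set Implicit Arguments. Unset Strict Implicit. Unset Printing Implicit Defensive.

Definition TL (R : archiRealFieldType) (T : finType) (w : T -> R) (bins : seq {set T}) : R :=
  \sum_(B <- bins) load w B.
Definition cnt (T : finType) (i : T) (bins : seq {set T}) : nat :=
  count (fun B : {set T} => i \in B) bins.

Lemma TL_count (R : archiRealFieldType) (T : finType) (w : T -> R) bins :
  TL w bins = \sum_i w i * (cnt i bins)%:R.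
Proof.
elim: bins => [|B bins IH]; rewrite /TL /cnt.
  by rewrite big_nil; under eq_bigr do rewrite /= mulr0; rewrite big1.
rewrite big_cons -/(TL w bins) IH /load.
under [RHS]eq_bigr do rewrite /= natrD mulrDr.
rewrite big_split /=; congr (_ + _).
rewrite big_mkcond /=; apply: eq_bigr => i _.
by case: (i \in B); rewrite ?mulr1 ?mulr0.
Qed.

Lemma set_nth_split (T : Type) (x0 : T) (l : seq T) j y : (j < size l)%N ->
  set_nth x0 l j y = take j l ++ y :: drop j.+1 l.
Proof.
elim: l j => [|a l IH] [|j] //= H.
  by rewrite drop0.
by rewrite IH.
Qed.

Lemma nth_split (T : Type) (x0 : T) (l : seq T) j : (j < size l)%N ->
  l = take j l ++ nth x0 l j :: drop j.+1 l.
Proof. by move=> H; rewrite -(drop_nth x0 H) cat_take_drop. Qed.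

Lemma TL_ge (R : archiRealFieldType) (T : finType) (w : T -> R) (i : T) (c : R) (bins : seq {set T}) :
  (forall B, B \in bins -> i \notin B -> c <= load w B) ->
  (forall B, B \in bins -> 0 <= load w B) ->
  (count (fun B : {set T} => i \notin B) bins)%:R * c <= TL w bins.
Proof.
elim: bins => [|B bins IH] H0 H1; first by rewrite /TL big_nil mul0r.
rewrite /TL big_cons -/(TL w bins) /= natrD mulrDl.
apply: lerD; last by apply: IH => B' HB'; [apply: H0|apply: H1]; rewrite inE HB' orbT.
case: (boolP (i \in B)) => Hi /=; first by rewrite mul0r; apply: H1; rewrite inE eqxx.
by rewrite mul1r; apply: H0 => //; rewrite inE eqxx.
Qed.

Lemma load_ge0 (R : archiRealFieldType) (T : finType) (w : T -> R) B :
  (forall i, 0 <= w i) -> 0 <= load w B.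
Proof. by move=> H; apply: sumr_ge0 => i _. Qed.

Lemma step_lem (R : archiRealFieldType) (T : finType) (s : T -> R) S eps k bins i bins' :
  insert_step s S bins i bins' -> (forall j, 0 < s j) -> s i <= eps * S ->
  (cnt i bins < k)%N -> 0 <= (1 - eps) * S ->
  (forall j, cnt j bins' = cnt j bins + (i == j))%N /\
  (size bins' = size bins \/ (size bins' - k)%:R * ((1 - eps) * S) <= TL s bins').
Proof.
move=> st spos si ck hc.
have s0 : forall j, 0 <= s j by move=> j; apply: ltW.
case: st ck si => {bins i bins'}.
- move=> bins i j Hj Hni Hl ck si; split; last by left; rewrite size_set_nth; lia.
  move=> j'; rewrite /cnt set_nth_split //; have E := nth_split set0 Hj.
  rewrite [in RHS]E !count_cat /=.
  rewrite in_setU1 [j' == i]eq_sym.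
  case: (boolP (i == j')) => [/eqP <-|Hn] /=; last by rewrite addn0.
  by rewrite (negbTE Hni); lia.
- move=> bins i Hb ck si; split.
    move=> j; rewrite /cnt -cats1 count_cat /= in_set1 eq_sym; lia.
  right; rewrite size_rcons.
  have H1 : ((size bins).+1 - k <= count (fun B : {set T} => i \notin B) bins)%N.
    have := count_predC (fun B : {set T} => i \in B) bins.
    rewrite /cnt in ck.
    have -> : count (predC (fun B : {set T} => i \in B)) bins =
              count (fun B : {set T} => i \notin B) bins by apply: eq_count.
    lia.
  apply: le_trans (_ : (count (fun B : {set T} => i \notin B) bins)%:R * ((1 - eps) * S) <= _).
    apply: ler_wpM2r; last by rewrite ler_nat.
    by [].

  apply: le_trans (_ : TL s bins <= _).
    apply: TL_ge; last by move=> B _; apply: load_ge0.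
    move=> B HB HiB.
    have := Hb (index B bins); rewrite index_mem HB nth_index // => /(_ isT HiB).
    lra.
  rewrite /TL -cats1 big_cat /= big_cons big_nil addr0 lerDl.
  by apply: load_ge0.
Qed.

Lemma run_lem (R : archiRealFieldType) (T : finType) (s : T -> R) S eps k bins xs final :
  insert_run s S bins xs final -> (forall j, 0 < s j) ->
  (forall i, i \in xs -> s i <= eps * S) ->
  (forall i, cnt i bins + count_mem i xs <= k)%N -> 0 <= (1 - eps) * S ->
  (forall j, cnt j final = cnt j bins + count_mem j xs)%N /\
  (size final = size bins \/ (size final - k)%:R * ((1 - eps) * S) <= TL s final).
Proof.
move=> run spos; elim: run => {bins xs final}.
  by move=> bins _ _ _; split; [move=> j; rewrite addn0 | left].
move=> bins i xs bins' bins'' st run IH small ck hc.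
have ck' : (cnt i bins < k)%N by have := ck i; rewrite /= eqxx; lia.
have [C1 C2] := step_lem st spos (small i (mem_head _ _)) ck' hc.
have ck2 : forall j, (cnt j bins' + count_mem j xs <= k)%N.
  move=> j; rewrite C1; have := ck j; rewrite /= eq_sym; lia.
have [D1 D2] := IH (fun j Hj => small j (mem_behead (s:=i::xs) Hj)) ck2 hc.
split.
  move=> j; rewrite D1 C1 /= eq_sym; lia.
case: D2 => [E|]; last by right.
case: C2 => [E'|H]; first by left; rewrite E E'.
right; rewrite E; apply: le_trans H _.
rewrite !TL_count; apply: ler_sum => j _; apply: ler_wpM2l; first exact: ltW.
by rewrite ler_nat D1 leq_addr.
Qed.

Lemma count_flat (T : Type) (U : Type) (a : pred T) k (f : U -> T) l :
  count a (flatten [seq nseq k (f x) | x <- l]) = (k * count (a \o f) l)%N.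
Proof. by elim: l => [|x l IH] /=; [rewrite muln0|rewrite count_cat count_nseq IH /=; lia]. Qed.

Lemma sub_sum (R : numDomainType) (T : finType) (f : T -> R) (A B : {set T}) :
  (forall x, 0 <= f x) -> A \subset B -> \sum_(i in A) f i <= \sum_(i in B) f i.
Proof.
move=> f0 sub; rewrite big_mkcond [X in _ <= X]big_mkcond; apply: ler_sum => i _.
case: ifP => HA; first by rewrite (subsetP sub _ HA).
by case: ifP.
Qed.

Lemma rounded_le (R : archiRealFieldType) (T : finType) (s : T -> R) g ordJ i :
  (0 < g)%N -> (forall j, 0 <= s j) -> sorted (fun i j => s i <= s j) ordJ ->
  (index i ordJ + g < size ordJ)%N ->
  rounded s g ordJ i <= s (nth i ordJ (index i ordJ + g)).
Proof.
move=> g0 s0 so Hi; rewrite /rounded big_seq_cond.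
elim/big_ind: _ => //.
  by move=> x y Hx Hy; rewrite ge_max Hx Hy.
move=> j /andP[Hj /eqP Hg].
rewrite -{1}(nth_index i Hj).
have tr : transitive (fun i j : T => s i <= s j) by move=> a b c; apply: le_trans.
have rf : reflexive (fun i j : T => s i <= s j) by move=> a; apply: lexx.
apply: (sorted_leq_nth tr rf i so).
- by rewrite inE index_mem.
- by rewrite inE.
have := ltn_ceil (index j ordJ) g0; have := leq_divM (index i ordJ) g.
rewrite Hg; lia.
Qed.

Lemma ltsub1 a b c : (a < b - c)%N -> (a < b)%N.
Proof. lia. Qed.
Lemma ltsub2 a b c : (a < b - c)%N -> (a + c < b)%N.
Proof. lia. Qed.

Lemma shift_pack (R : archiRealFieldType) (T : finType) (s : T -> R) S k
    (J : {set T}) (ordJ : seq T) g Q :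
  (0 < g)%N -> 0 < S -> (forall i, 0 < s i <= S) -> perm_eq ordJ (enum J) ->
  sorted (fun i j => s i <= s j) ordJ -> kpacking setT s S k Q ->
  exists Q', kpacking J (rounded s g ordJ) S k Q' /\ (size Q' <= size Q + k * g)%N.
Proof.
move=> g0 S0 sP pJ so [_ [QL QC]].
have s0 : forall j, 0 <= s j by move=> j; have /andP[/ltW] := sP j.
have uJ : uniq ordJ by rewrite (perm_uniq pJ) enum_uniq.
have memJ : forall i, (i \in ordJ) = (i \in J) by move=> i; rewrite (perm_mem pJ) mem_enum.
set m := (size ordJ - g)%N.
pose h i := nth i ordJ (index i ordJ + g).
pose Bp (B : {set T}) := [set i | (index i ordJ < m)%N && (h i \in B)].
pose Q1 := [seq Bp B | B <- Q].
pose Q2 := flatten [seq nseq k [set x] | x <- drop m ordJ].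
have rS : forall i, rounded s g ordJ i <= S.
  move=> i; rewrite /rounded; elim/big_ind: _ => //; first exact: ltW.
    by move=> x y Hx Hy; rewrite ge_max Hx Hy.
  by move=> j _; have /andP[_] := sP j.
exists (Q1 ++ Q2); split; last first.
  rewrite size_cat size_map -[X in (_ + X <= _)%N]count_predT count_flat count_predT size_drop; apply: leq_add => //; apply: leq_mul => //.
  rewrite /m; lia.
split.
  move=> B; rewrite mem_cat => /orP[/mapP[B0 _ ->] | /flatten_mapP[x Hx]].
    apply/subsetP => i; rewrite inE => /andP[Hi _]; rewrite -memJ -index_mem; exact: ltsub1 Hi.
  by rewrite mem_nseq => /andP[_ /eqP ->]; rewrite sub1set -memJ; exact: mem_drop Hx.
split.
  move=> B; rewrite mem_cat => /orP[/mapP[B0 HB0 ->] | /flatten_mapP[x Hx]].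
    rewrite /load; apply: le_trans (_ : \sum_(i in Bp B0) s (h i) <= _).
      apply: ler_sum => i; rewrite inE => /andP[Hi _]; apply: rounded_le => //; exact: ltsub2 Hi.
    rewrite -big_imset /=.
      apply: le_trans (QL _ HB0); apply: sub_sum => //.
      by apply/subsetP => j /imsetP[i]; rewrite inE => /andP[_ Hh] ->.
    move=> i i'; rewrite !inE => /andP[Hi _] /andP[Hi' _] E.
    have Hin : i \in ordJ by rewrite -index_mem; exact: ltsub1 Hi.
    have Hin' : i' \in ordJ by rewrite -index_mem; exact: ltsub1 Hi'.
    have L1 := ltsub2 Hi; have L2 := ltsub2 Hi'.
    have Ei : index i ordJ = index i' ordJ.
      apply/eqP; rewrite -(eqn_add2r g) -(nth_uniq i L1 L2 uJ); apply/eqP.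
      by move: E; rewrite /h (set_nth_default i i' L2).
    by rewrite -(nth_index i Hin) Ei (@set_nth_default _ _ i' i) ?index_mem // nth_index.
  by rewrite mem_nseq => /andP[_ /eqP ->]; rewrite /load big_set1; exact: rS.
move=> i; rewrite -memJ => Hi.
rewrite count_cat count_map count_flat.
have -> : count ((fun B : {set T} => i \in B) \o (fun x => [set x])) (drop m ordJ)
          = count_mem i (drop m ordJ) by apply: eq_count => x; rewrite /= in_set1 eq_sym.
rewrite count_uniq_mem ?drop_uniq //.
case: (ltnP (index i ordJ) m) => Hm.
  have -> : count (preim Bp (fun B : {set T} => i \in B)) Q = count (fun B : {set T} => h i \in B) Q.
    by apply: eq_count => B; rewrite /= inE Hm.
  rewrite QC ?in_setT //.
  case: (boolP (i \in drop m ordJ)) => [|_]; last by rewrite muln0 addn0.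
  move/(nthP i) => [q Hq Eq]; move: Hm; rewrite -Eq nth_drop index_uniq //.
    lia.
  by rewrite size_drop in Hq; lia.
have -> : count (preim Bp (fun B : {set T} => i \in B)) Q = 0%N.
  rewrite (eq_count (a2 := pred0)) ?count_pred0 // => B; rewrite /= inE.
  by rewrite ltnNge Hm.
have -> : i \in drop m ordJ.
  by have := Hi; rewrite -{1}(cat_take_drop m ordJ) mem_cat (in_take _ Hi) ltnNge Hm.
by rewrite muln1.
Qed.

Unset Implicit Arguments. Set Strict Implicit.

Lemma TL_le (R : archiRealFieldType) (T : finType) (w : T -> R) S (bins : seq {set T}) :
  (forall B, B \in bins -> load w B <= S) -> TL w bins <= (size bins)%:R * S.
Proof.
elim: bins => [|B bins IH] H; first by rewrite /TL big_nil mul0r.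
rewrite /TL big_cons -/(TL w bins) /= -addn1 natrD mulrDl mul1r [in X in _ <= X]addrC.
apply: lerD; first by apply: H; rewrite inE eqxx.
by apply: IH => B' HB'; apply: H; rewrite inE HB' orbT.
Qed.

Theorem theorem4 (R : archiRealFieldType) (n : nat) (s : 'I_n -> R)
    (S eps : R) (k : nat)
    (ordJ : seq 'I_n) (P : seq {set 'I_n}) (ordI : seq 'I_n)
    (final : seq {set 'I_n}) :
  0 < S ->
  (forall i, 0 < s i <= S) ->
  (0 < k)%N ->
  0 < eps <= 1 / 2 ->
  (* step 2: J sorted non-decreasingly by size *)
  perm_eq ordJ (enum (largeJ s S eps)) ->
  sorted (fun i j => s i <= s j) ordJ ->
  (* step 3: an optimal k-times packing of the rounded instance U;
     step 4: the same bins, now holding the original items of J *)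
  opt_kpacking (largeJ s S eps)
    (rounded s (gsize #|largeJ s S eps| eps) ordJ) S k P ->
  (* step 5: the k copies of each small item, items in some order *)
  perm_eq ordI (enum (smallI s S eps)) ->
  insert_run s S P (flatten [seq nseq k i | i <- ordI]) final ->
  (* bins(D_k) <= (1 + 2 eps) OPT(D_k) + k *)
  forall Q : seq {set 'I_n}, kpacking [set: 'I_n] s S k Q ->
    (size final)%:R <= (1 + 2 * eps) * (size Q)%:R + k%:R.
Proof.
move=> S0 sP k0 /andP[e0 e2] pJ so [[PJ [PL PC]] Popt] pI run Q QK.
have QK' := QK; move: QK' => [_ [QL QC]].
set J := largeJ s S eps in PJ PC Popt pJ.
set I := smallI s S eps in pI.
have spos : forall j, 0 < s j by move=> j; have /andP[] := sP j.
have s0 : forall j, 0 <= s j by move=> j; apply: ltW.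
have uI : uniq ordI by rewrite (perm_uniq pI) enum_uniq.
have memI : forall i, (i \in ordI) = (i \in I) by move=> i; rewrite (perm_mem pI) mem_enum.
have compl : forall i, ((i \in J) + (i \in I) = 1)%N.
  by move=> i; rewrite !inE ltNge; case: (s i <= eps * S).
set xs := flatten [seq nseq k i | i <- ordI] in run.
have cxs : forall i, count_mem i xs = (k * (i \in I))%N.
  move=> i; transitivity (k * count_mem i ordI)%N; first exact: count_flat.
  by rewrite count_uniq_mem // memI.
have cP : forall i, cnt i P = (k * (i \in J))%N.
  move=> i; case: (boolP (i \in J)) => Hi; first by rewrite muln1 /cnt PC.
  rewrite muln0; apply/eqP; rewrite -leqn0 leqNgt -has_count; apply/hasPn => B HB.
  by apply/negP => HiB; move/negP: Hi; apply; apply: (subsetP (PJ B HB)).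
have ck : forall i, (cnt i P + count_mem i xs <= k)%N.
  by move=> i; rewrite cP cxs -mulnDr compl muln1.
have small : forall i, i \in xs -> s i <= eps * S.
  move=> i; rewrite -has_pred1 has_count cxs; case: (boolP (i \in I)) => //.
    by rewrite inE.
  by rewrite muln0.
have hc : 0 <= (1 - eps) * S by apply: mulr_ge0; [lra | exact: ltW].
have [F1 F2] := run_lem run spos small ck hc.
have cF : forall i, cnt i final = k by move=> i; rewrite F1 cP cxs -mulnDr compl muln1.
have TLQ : TL s Q = TL s final by rewrite !TL_count; apply: eq_bigr => i _; rewrite cF /cnt QC ?in_setT.
have TLle := @TL_le _ _ s S Q QL.
set q := (size Q)%:R in TLle *.
case: F2 => [EP|HF].
  have g0 : (0 < gsize #|J| eps)%N by rewrite /gsize leq_max.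
  have [Q' [Q'K Q'S]] := shift_pack g0 S0 sP pJ so QK.
  have HP := Popt Q' Q'K.
  set g := gsize #|J| eps in Q'S HP.
  set tt := Num.truncn (#|J|%:R * eps ^+ 2).
  have gt : (g <= 1 + tt)%N by rewrite /g /gsize -/tt; lia.
  have Ht : tt%:R <= #|J|%:R * eps ^+ 2 by rewrite truncn_le; apply: mulr_ge0; [exact: ler0n | exact: sqr_ge0].
  have TQ : TL s Q = \sum_i s i * k%:R.
    by rewrite TL_count; apply: eq_bigr => i _; rewrite /cnt QC ?in_setT.
  have HJ : k%:R * (#|J|%:R * eps) <= q.
    rewrite -(ler_pM2r S0); apply: le_trans TLle; rewrite TQ.
    apply: le_trans (_ : \sum_(i in J) s i * k%:R <= _); last first.
      rewrite [X in X <= _]big_mkcond; apply: ler_sum => i _; case: ifP => _ //.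
      by apply: mulr_ge0 => //; exact: ler0n.
    apply: le_trans (_ : \sum_(i in J) (eps * S) * k%:R <= _); last first.
      apply: ler_sum => i; rewrite inE => Hi; apply: ler_wpM2r; [exact: ler0n | exact: ltW].
    rewrite sumr_const -mulr_natr; rewrite le_eqVlt; apply/orP; left; apply/eqP; ring.
  rewrite EP; apply: le_trans (_ : (size Q + k * (1 + tt))%:R <= _).
    by rewrite ler_nat; apply: leq_trans HP _; apply: leq_trans Q'S _; rewrite leq_add2l leq_mul2l gt orbT.
  rewrite natrD natrM natrD -/q.
  have k0' : 0 <= k%:R :> R by exact: ler0n.
  have h1 : k%:R * tt%:R <= k%:R * (#|J|%:R * eps ^+ 2) by apply: ler_wpM2l.
  have h2 : eps * (k%:R * (#|J|%:R * eps)) <= eps * q by apply: ler_wpM2l => //; exact: ltW.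
  have q0 : 0 <= q by exact: ler0n.
  nra.
set a := ((size final - k)%N)%:R in HF.
have a0 : 0 <= a by rewrite /a ler0n.
have Ha : a * (1 - eps) <= q.
  rewrite -(ler_pM2r S0) -mulrA; apply: le_trans HF _; rewrite -TLQ; exact: TLle.
have HN : (size final)%:R <= a + k%:R by rewrite /a -natrD ler_nat; lia.
apply: le_trans HN _; rewrite lerD2r.
have h1 : (1 + 2 * eps) * (a * (1 - eps)) <= (1 + 2 * eps) * q by apply: ler_wpM2l => //; lra.
have h2 : 0 <= eps * (1 - 2 * eps) * a by apply: mulr_ge0 => //; apply: mulr_ge0; lra.
nra.
Qed.
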